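(* Let $p\ge 1$, $\alpha\in[0,1]$, $0<\varepsilon\le 1$ and $g\in\mathbb{R}^p$ with $g\neq 0$. Let $m$ be an index with $|g_m|=\max_d|g_d|$, let $I_{12}$ be the $p\times p$ diagonal matrix with $(I_{12})_{dd}=1$ if $|g_d|\ge \alpha|g_m|$ and $0$ otherwise, and let $p_1:=\sum_d (I_{12})_{dd}$ (so $1\le p_1\le p$). Define $$\Delta x_{12,\varepsilon}:=-I_{12}g\left(\frac{\alpha\varepsilon}{\|I_{12}g\|_1}+\frac{(1-\alpha)\sqrt{\varepsilon}}{\|I_{12}g\|_2}\right)$$ and $h_\alpha(v):=\alpha\|v\|_1+(1-\alpha)\|v\|_2^2$. Then $$0.61\,\varepsilon<\varepsilon\left(1-\alpha(1-\alpha)(2-\alpha)\left(1-\frac{\varepsilon}{p_1}\right)\right)\le h_\alpha(\Delta x_{12,\varepsilon})\le \varepsilon\left(1+\alpha(1-\alpha)\left(\sqrt{\frac{p_1}{\varepsilon}}-1\right)\right)\le \varepsilon\left(1+\frac{\sqrt{p_1/\varepsilon}-1}{4}\right).$$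
   Context: $\Delta x_{12,\varepsilon}$ is the elastic gradient descent update direction in the general stagewise framework with step size $\varepsilon$. *)

(* Defs.v *)
From mathcomp Require Import all_boot all_order all_algebra.
From mathcomp Require Import reals.
Set Implicit Arguments. Unset Strict Implicit. Unset Printing Implicit Defensive.
Import Order.TTheory GRing.Theory Num.Theory.
Local Open Scope ring_scope.

Definition norm1 (R : realType) (p : nat) (v : 'I_p -> R) : R :=
  \sum_(d < p) `|v d|.
Definition norm2 (R : realType) (p : nat) (v : 'I_p -> R) : R :=
  Num.sqrt (\sum_(d < p) v d ^+ 2).

(* indicator of the diagonal entries of I_12 : |g_d| >= alpha |g_m| *)
Definition I12 (R : realType) (p : nat) (alpha : R) (g : 'I_p -> R) (m : 'I_p)
  (d : 'I_p) : R := if alpha * `|g m| <= `|g d| then 1 else 0.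

Definition I12g (R : realType) (p : nat) (alpha : R) (g : 'I_p -> R) (m : 'I_p)
  : 'I_p -> R := fun d => I12 alpha g m d * g d.

Definition p1 (R : realType) (p : nat) (alpha : R) (g : 'I_p -> R) (m : 'I_p) : R :=
  \sum_(d < p) I12 alpha g m d.

Definition dx12 (R : realType) (p : nat) (alpha eps : R) (g : 'I_p -> R) (m : 'I_p)
  : 'I_p -> R :=
  fun d => - I12g alpha g m d *
    (alpha * eps / norm1 (I12g alpha g m)
     + (1 - alpha) * Num.sqrt eps / norm2 (I12g alpha g m)).

Definition h_alpha (R : realType) (p : nat) (alpha : R) (v : 'I_p -> R) : R :=
  alpha * norm1 v + (1 - alpha) * (norm2 v) ^+ 2.

(* Main.v *)
Require Import Defs.
From mathcomp Require Import all_boot all_order all_algebra.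
From mathcomp Require Import reals.
From mathcomp Require Import ring lra.
Import Order.TTheory GRing.Theory Num.Theory.
Local Open Scope ring_scope.

Lemma cubic_bound (R : realFieldType) (a : R) : 0 <= a <= 1 ->
  a * (1 - a) * (2 - a) < 39/100.
Proof.
move=> /andP[a0 a1].
have H : 0 <= (a - 4226/10000)^+2 * (21548/10000 - a).
  apply: mulr_ge0; first exact: sqr_ge0. lra.
nra.
Qed.

Lemma alg (R : realFieldType) (a s q r t u : R) :
  0 <= a <= 1 -> 0 < s <= 1 -> 1 <= q -> 1 <= r <= q -> r * t = 1 -> q * u = 1 ->
  let h := a * (a * s^+2 + (1 - a) * s * r) + (1 - a) * (a * s^+2 * t + (1 - a) * s)^+2 in
  [/\ 61 / 100 * s^+2 < s^+2 * (1 - a * (1 - a) * (2 - a) * (1 - s^+2 * u^+2)),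
      s^+2 * (1 - a * (1 - a) * (2 - a) * (1 - s^+2 * u^+2)) <= h,
      h <= s^+2 + a * (1 - a) * (s * q - s^+2)
    & s^+2 + a * (1 - a) * (s * q - s^+2) <= s^+2 + (s * q - s^+2) / 4].
Proof.
move=> /andP[a0 a1] /andP[s0 s1] q1 /andP[r1 rq] rt qu h.
have t0 : 0 < t.
  have: 0 < r * t by rewrite rt.
  by rewrite pmulr_rgt0 // (lt_le_trans ltr01).
have u0 : 0 < u.
  have: 0 < q * u by rewrite qu.
  by rewrite pmulr_rgt0 // (lt_le_trans ltr01).
have t1 : t <= 1 by nra.
have ut : u <= t by nra.
have u1 : u <= 1 by lra.
have b0 : 0 <= 1 - a by lra.
have ab0 : 0 <= a * (1 - a) by apply: mulr_ge0.
have su1 : 0 <= s^+2 * u^+2 <= 1.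
  apply/andP; split; first by rewrite mulr_ge0 // sqr_ge0.
  have su0 : 0 <= s * u by apply: mulr_ge0; apply: ltW.
  have su1 : s * u <= 1 by nra.
  rewrite -exprMn expr2; nra.
have f0 : 0 <= a * (1 - a) * (2 - a) by apply: mulr_ge0 => //; lra.
have fb : a * (1 - a) * (2 - a) < 39/100 by apply: cubic_bound; lra.
have sq : s <= q by lra.
split.
- have s20 : 0 < s^+2 by rewrite exprn_gt0.
  have : a * (1 - a) * (2 - a) * (1 - s ^+ 2 * u ^+ 2) < 39/100.
    apply: le_lt_trans fb. rewrite ler_piMr //; lra.
  move=> H. nra.
- rewrite -subr_ge0.
  have -> : h - s ^+ 2 * (1 - a * (1 - a) * (2 - a) * (1 - s ^+ 2 * u ^+ 2))
     = a * (1 - a) * (s * (r - s) + a * s^+4 * (t^+2 - u^+2) + 2 * (1 - a) * s^+3 * (t - s * u^+2)).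
    rewrite /h; ring.
  apply: mulr_ge0 => //.
  apply: addr_ge0; first apply: addr_ge0.
  + apply: mulr_ge0; lra.
  + apply: mulr_ge0; first by apply: mulr_ge0 => //; rewrite exprn_ge0 // ltW.
    nra.
  + apply: mulr_ge0; first by apply: mulr_ge0; [lra| rewrite exprn_ge0 // ltW].
    have : s * u^+2 <= u^+2 by rewrite ler_piMl // sqr_ge0.
    have : u^+2 <= u by rewrite expr2 ler_piMl // ltW.
    lra.
- rewrite -subr_ge0.
  have -> : s ^+ 2 + a * (1 - a) * (s * q - s ^+ 2) - h
     = a * (1 - a) * s * (q - r) + (1 - a) * a^+2 * (s^+2 - s^+4 * t^+2)
       + 2 * a * (1 - a)^+2 * (s^+2 - s^+3 * t).
    rewrite /h; ring.
  have st : s * t <= 1 by nra.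
  have st0 : 0 <= s * t by apply: mulr_ge0; apply: ltW.
  have e1 : s^+2 - s^+4 * t^+2 = s^+2 * (1 - (s * t)^+2) by ring.
  have e2 : s^+2 - s^+3 * t = s^+2 * (1 - s * t) by ring.
  rewrite e1 e2.
  have s20 : 0 <= s^+2 by rewrite sqr_ge0.
  apply: addr_ge0; first apply: addr_ge0.
  + apply: mulr_ge0; [apply: mulr_ge0 => //; exact: ltW | lra].
  + apply: mulr_ge0; first by apply: mulr_ge0 => //; rewrite sqr_ge0.
    apply: mulr_ge0 => //. nra.
  + apply: mulr_ge0; first by apply: mulr_ge0; [lra| rewrite sqr_ge0].
    apply: mulr_ge0 => //. lra.
- have : a * (1 - a) <= 1/4.
    have := sqr_ge0 (a - 1/2); rewrite expr2; nra.
  have : 0 <= s * q - s^+2 by rewrite expr2 -mulrBr mulr_ge0 // ?subr_ge0 // ltW.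
  nra.
Qed.

Lemma sqnorm (R : realType) (x : R) : `|x| ^+ 2 = x ^+ 2.
Proof. by rewrite -normrX ger0_norm // sqr_ge0. Qed.

Theorem theorem5 (R : realType) (p : nat) (alpha eps : R) (g : 'I_p -> R)
  (m : 'I_p) :
  (1 <= p)%N ->
  0 <= alpha <= 1 ->
  0 < eps <= 1 ->
  (exists d, g d != 0) ->
  (forall d, `|g d| <= `|g m|) ->
  let P1 := p1 alpha g m in
  let h := h_alpha alpha (dx12 alpha eps g m) in
  [/\ 61 / 100 * eps < eps * (1 - alpha * (1 - alpha) * (2 - alpha) * (1 - eps / P1)),
      eps * (1 - alpha * (1 - alpha) * (2 - alpha) * (1 - eps / P1)) <= h,
      h <= eps * (1 + alpha * (1 - alpha) * (Num.sqrt (P1 / eps) - 1))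
    & eps * (1 + alpha * (1 - alpha) * (Num.sqrt (P1 / eps) - 1))
        <= eps * (1 + (Num.sqrt (P1 / eps) - 1) / 4)].
Proof.
move=> _ ha he [d0 gd0] hm P1 h.
have /andP[a0 a1] := ha; have /andP[e0 e1] := he.
have gm : g m != 0.
  apply/negP => /eqP gm0; move: (hm d0); rewrite gm0 normr0 normr_le0.
  by move/eqP => E; rewrite E eqxx in gd0.
set I := I12 alpha g m.
set v := I12g alpha g m.
have I01 : forall d, I d = 0 \/ I d = 1.
  by move=> d; rewrite /I /I12; case: ifP => _; [right|left].
have Ige0 : forall d, 0 <= I d by move=> d; case: (I01 d) => ->.
have Im : I m = 1.
  rewrite /I /I12 ifT //; rewrite ler_piMl //.
have vE : forall d, v d = I d * g d by [].
have II : forall d, I d * I d = I d by move=> d; case: (I01 d) => ->; rewrite ?mul0r ?mul1r.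
have Iv : forall d, I d * `|v d| = `|v d|.
  by move=> d; rewrite vE normrM (ger0_norm (Ige0 d)) mulrA II.
set n1 := norm1 v.
set S2 := \sum_(d < p) v d ^+ 2.
have vm : v m = g m by rewrite vE Im mul1r.
have n1ge : forall d, `|v d| <= n1.
  move=> d; rewrite /n1 /norm1 (bigD1 d) //= lerDl.
  by apply: sumr_ge0 => i _.
have S2gt0 : 0 < S2.
  rewrite /S2 (bigD1 m) //=.
  apply: lt_le_trans (_ : v m ^+ 2 <= _).
    by rewrite vm -sqnorm exprn_gt0 // normr_gt0.
  by rewrite lerDl; apply: sumr_ge0 => i _; exact: sqr_ge0.
have n1gt0 : 0 < n1 by apply: lt_le_trans (n1ge m); rewrite vm normr_gt0.
have P1ge1 : 1 <= P1.
  rewrite /P1 /p1 (bigD1 m) //= -/I Im lerDl.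
  by apply: sumr_ge0 => i _.
have S2le : S2 <= n1 ^+ 2.
  rewrite /S2 expr2 {2}/n1 /norm1 mulr_sumr.
  apply: ler_sum => d _.
  rewrite -sqnorm expr2 mulrC ler_wpM2r //.
have n1le : n1 ^+ 2 <= P1 * S2.
  set k := n1 / P1.
  have H : 0 <= \sum_(d < p) (`|v d| - I d * k) ^+ 2.
    by apply: sumr_ge0 => d _; exact: sqr_ge0.
  have E : \sum_(d < p) (`|v d| - I d * k) ^+ 2
      = \sum_(d < p) (v d ^+ 2 - 2 * k * `|v d|) + k ^+ 2 * P1.
    rewrite /P1 /p1 -/I mulr_sumr -big_split /=.
    apply: eq_bigr => d _.
    have -> : (`|v d| - I d * k) ^+ 2 = `|v d| ^+ 2 - 2 * k * (I d * `|v d|) + k ^+ 2 * (I d * I d) by ring.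
    by rewrite Iv II sqnorm.
  rewrite E sumrB -mulr_sumr -/S2 -/n1 in H.
  have P0 : 0 < P1 by lra.
  have : n1 ^+ 2 / P1 <= S2.
    have -> : n1 ^+ 2 / P1 = 2 * k * n1 - k ^+ 2 * P1 by rewrite /k; field; lra.
    have En1 : \sum_(i < p) `|v i| = n1 by []. rewrite En1 in H. lra.
  by rewrite ler_pdivrMr // mulrC.
set n2 := Num.sqrt S2.
have n2gt0 : 0 < n2 by rewrite sqrtr_gt0.
have S2E : S2 = n2 ^+ 2 by rewrite sqr_sqrtr // ltW.
set s := Num.sqrt eps.
have s0 : 0 < s by rewrite sqrtr_gt0.
have s1 : s <= 1 by rewrite -sqrtr1 ler_sqrt.
have epsE : eps = s ^+ 2 by rewrite sqr_sqrtr // ltW.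
set q := Num.sqrt P1.
have q1 : 1 <= q by rewrite -sqrtr1 ler_sqrt //; lra.
have P1E : P1 = q ^+ 2 by rewrite sqr_sqrtr //; lra.
have r1 : 1 <= n1 / n2.
  rewrite ler_pdivlMr // mul1r -(ger0_norm (ltW n1gt0)) -sqrtr_sqr -/n2.
  by rewrite ler_sqrt // sqr_ge0.
have rq : n1 / n2 <= q.
  rewrite ler_pdivrMr // -(ger0_norm (ltW n1gt0)) -sqrtr_sqr /q /n2 -sqrtrM; last lra.
  by rewrite ler_sqrt // mulr_ge0 //; [lra | exact: ltW].
set c := alpha * eps / n1 + (1 - alpha) * Num.sqrt eps / n2.
have c0 : 0 <= c.
  rewrite /c; apply: addr_ge0; apply: divr_ge0; try apply: mulr_ge0; try lra; 
    try exact: ltW; exact: sqrtr_ge0.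
have dxE : dx12 alpha eps g m = fun d => - v d * c by [].
have N1 : norm1 (dx12 alpha eps g m) = c * n1.
  rewrite dxE /norm1 /n1 /norm1 mulr_sumr; apply: eq_bigr => d _.
  by rewrite normrM normrN (ger0_norm c0) mulrC.
have N2 : norm2 (dx12 alpha eps g m) ^+ 2 = c ^+ 2 * S2.
  rewrite dxE /norm2 sqr_sqrtr; last by apply: sumr_ge0 => d _; exact: sqr_ge0.
  rewrite /S2 mulr_sumr; apply: eq_bigr => d _.
  by rewrite exprMn sqrrN mulrC.
have hE : h = alpha * (alpha * s ^+ 2 + (1 - alpha) * s * (n1 / n2))
   + (1 - alpha) * (alpha * s ^+ 2 * (n2 / n1) + (1 - alpha) * s) ^+ 2.
  rewrite /h /h_alpha N1 N2 /c -/s epsE S2E.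
  field.
  apply/andP; split; apply/lt0r_neq0 => //.
have s01 : 0 < s <= 1 by rewrite s0 s1.
have r1q : 1 <= n1 / n2 <= q by rewrite r1 rq.
have rt : n1 / n2 * (n2 / n1) = 1.
  by field; apply/andP; split; apply/lt0r_neq0.
have qu : q * q^-1 = 1 by rewrite mulfV // gt_eqF // (lt_le_trans ltr01).
have := @alg R alpha s q (n1 / n2) (n2 / n1) q^-1 ha s01 q1 r1q rt qu.
move=> [A1 A2 A3 A4].
have sqE : Num.sqrt (P1 / eps) = q / s.
  by rewrite sqrtrM ?sqrtrV //; lra.
rewrite sqE hE epsE P1E -exprVn.
have E3 : forall k, s ^+ 2 * (1 + k * (q / s - 1)) = s ^+ 2 + k * (s * q - s ^+ 2).
  by move=> k; field; apply/lt0r_neq0.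
have E4 : s ^+ 2 * (1 + (q / s - 1) / 4) = s ^+ 2 + (s * q - s ^+ 2) / 4.
  by field; apply/lt0r_neq0.
by rewrite E3 E4; split.
Qed.
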